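(* Let $K$ be an algebraically closed field, $\mathcal{T}$ a $\operatorname{Hom}$-finite Krull–Schmidt triangulated $K$-category with Jacobson radical $\mathcal{J}$, and $\mathcal{I}$ a functorially finite ideal. Let $X$ and $Z$ be indecomposable and $Y=\coprod_{i=1}^nY_i^{m_i}$ with $Y_i$ indecomposable and $Y_i\not\cong Y_j$ for $i\neq j$. (1) A morphism $f=(f_{ij})^t:X\to Y$, with components $f_{ij}:X\to Y_i$ ($1\le j\le m_i$) lying in $\mathcal{I}$, is an $\mathcal{I}$-source map provided (i) for each $i$, the classes $\bar f_{i1},\dots,\bar f_{im_i}$ form a basis of $\operatorname{Irr}^-_{\mathcal{I}}(X,Y_i)$, and (ii) whenever $\operatorname{Irr}^-_{\mathcal{I}}(X,Y')\neq0$ with $Y'$ indecomposable, $Y'\cong Y_i$ for some $i$. (2) A morphism $g=(g_{ij}):Y\to Z$, with components $g_{ij}:Y_i\to Z$ lying in $\mathcal{I}$, is an $\mathcal{I}$-sink map provided (i) for each $i$, the classes $\bar g_{i1},\dots,\bar g_{im_i}$ form a basis of $\operatorname{Irr}^+_{\mathcal{I}}(Y_i,Z)$, and (ii) whenever $\operatorname{Irr}^+_{\mathcal{I}}(Y',Z)\neq0$ with $Y'$ indecomposable, $Y'\cong Y_i$ for some $i$.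
   Context: Composition of $b$ then $a$ is $ab$. An ideal: subgroups $\mathcal{I}(X,Y)\subseteq\operatorname{Hom}(X,Y)$ closed under composition; functorially finite if every object has left and right $\mathcal{I}$-approximations (morphisms of $\mathcal{I}$ starting/ending at the object through which all such morphisms of $\mathcal{I}$ factor). For ideals $\mathcal{A},\mathcal{B}$, $\mathcal{A}\mathcal{B}$ is the ideal of finite sums of composites $ab$, $a\in\mathcal{A}$, $b\in\mathcal{B}$. For indecomposable $A,B$: $\operatorname{Irr}^-_{\mathcal{I}}(A,B)=\mathcal{I}(A,B)/(\mathcal{J}\mathcal{I})(A,B)$ and $\operatorname{Irr}^+_{\mathcal{I}}(A,B)=\mathcal{I}(A,B)/(\mathcal{I}\mathcal{J})(A,B)$. An $\mathcal{I}$-source map is a left minimal left $\mathcal{I}$-approximation ($f$ left minimal: $gf=f$ implies $g$ invertible); an $\mathcal{I}$-sink map is a right minimal right $\mathcal{I}$-approximation. *)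

(* Defs.v *)
From HB Require Import structures.
From mathcomp Require Export all_boot all_algebra.
Set Implicit Arguments. Unset Strict Implicit. Unset Printing Implicit Defensive.
Import GRing.Theory.
Local Open Scope ring_scope.

(* Convention of the paper: [comp a b] is "b then a" (written ab). *)
Record KCat (K : fieldType) := {
  obj :> Type;
  hom : obj -> obj -> vectType K;
  comp : forall X Y Z : obj, hom Y Z -> hom X Y -> hom X Z;
  idm : forall X : obj, hom X X;
  compA : forall (X Y Z W : obj) (h : hom Z W) (g : hom Y Z) (f : hom X Y),
      comp h (comp g f) = comp (comp h g) f;
  comp1m : forall (X Y : obj) (f : hom X Y), comp (idm Y) f = f;
  compm1 : forall (X Y : obj) (f : hom X Y), comp f (idm X) = f;
  comp_linl : forall (X Y Z : obj) (f : hom X Y) (a : K) (g g' : hom Y Z),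
      comp (a *: g + g') f = a *: comp g f + comp g' f;
  comp_linr : forall (X Y Z : obj) (g : hom Y Z) (a : K) (f f' : hom X Y),
      comp g (a *: f + f') = a *: comp g f + comp g f'
}.
Arguments hom {K} C X Y : rename.
Arguments comp {K C X Y Z} g f : rename.
Arguments idm {K C} X : rename.

Section Notions.
Variables (K : fieldType) (C : KCat K).

Definition invertible (X Y : C) (f : hom C X Y) : Prop :=
  exists g : hom C Y X, comp g f = idm X /\ comp f g = idm Y.

Definition iso (X Y : C) : Prop := exists f : hom C X Y, invertible f.

Definition biproduct (T : finType) (A : T -> C) (X : C)
    (inj : forall t, hom C (A t) X) (prj : forall t, hom C X (A t)) : Prop :=
  [/\ forall t, comp (prj t) (inj t) = idm (A t),
      forall t t', t != t' -> comp (prj t) (inj t') = 0 &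
      \sum_(t : T) comp (inj t) (prj t) = idm X].
Arguments biproduct {T} A X inj prj.

(* additive: all finite biproducts exist (incl. a zero object, n = 0) *)
Definition additive : Prop :=
  forall (n : nat) (A : 'I_n -> C), exists (X : C)
    (inj : forall t, hom C (A t) X) (prj : forall t, hom C X (A t)),
    biproduct A X inj prj.

Definition local_end (X : C) : Prop :=
  idm X <> 0 /\ forall e : hom C X X, invertible e \/ invertible (idm X - e).

Definition krull_schmidt : Prop :=
  forall X : C, exists (n : nat) (A : 'I_n -> C)
    (inj : forall t, hom C (A t) X) (prj : forall t, hom C X (A t)),
    biproduct A X inj prj /\ forall t, local_end (A t).

Definition indecomposable (X : C) : Prop :=
  idm X <> 0 /\
  forall (A B : C) (i1 : hom C A X) (i2 : hom C B X) (p1 : hom C X A)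
         (p2 : hom C X B),
    comp p1 i1 = idm A -> comp p2 i2 = idm B ->
    comp p1 i2 = 0 -> comp p2 i1 = 0 ->
    comp i1 p1 + comp i2 p2 = idm X ->
    idm A = 0 \/ idm B = 0.

Definition morph_class := forall X Y : C, hom C X Y -> Prop.

Definition is_ideal (I : morph_class) : Prop :=
  [/\ forall X Y : C, I X Y 0,
      forall (X Y : C) (f g : hom C X Y), I X Y f -> I X Y g -> I X Y (f - g),
      forall (X Y Z : C) (g : hom C Y Z) (f : hom C X Y), I X Y f -> I X Z (comp g f) &
      forall (X Y Z : C) (g : hom C Y Z) (f : hom C X Y), I Y Z g -> I X Z (comp g f)].

Definition rad : morph_class :=
  fun X Y f => forall g : hom C Y X, invertible (idm X - comp g f).

(* product ideal AB: finite sums of composites ab with a in A, b in B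
   (b first, then a) *)
Definition prod_ideal (A B : morph_class) : morph_class :=
  fun X Y h => exists (n : nat) (W : 'I_n -> C)
    (a : forall k, hom C (W k) Y) (b : forall k, hom C X (W k)),
    [/\ forall k, A _ _ (a k), forall k, B _ _ (b k) &
        h = \sum_(k < n) comp (a k) (b k)].

Definition left_approx (I : morph_class) (X Y : C) (f : hom C X Y) : Prop :=
  I X Y f /\ forall (W : C) (h : hom C X W), I X W h ->
    exists u : hom C Y W, h = comp u f.

Definition right_approx (I : morph_class) (Y X : C) (g : hom C Y X) : Prop :=
  I Y X g /\ forall (W : C) (h : hom C W X), I W X h ->
    exists u : hom C W Y, h = comp g u.

Definition functorially_finite (I : morph_class) : Prop :=
  forall X : C,
    (exists (Y : C) (f : hom C X Y), left_approx I f) /\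
    (exists (Y : C) (g : hom C Y X), right_approx I g).

Definition left_minimal (X Y : C) (f : hom C X Y) : Prop :=
  forall g : hom C Y Y, comp g f = f -> invertible g.

Definition right_minimal (Y Z : C) (g : hom C Y Z) : Prop :=
  forall h : hom C Y Y, comp g h = g -> invertible h.

Definition source_map (I : morph_class) (X Y : C) (f : hom C X Y) : Prop :=
  left_approx I f /\ left_minimal f.

Definition sink_map (I : morph_class) (Y Z : C) (g : hom C Y Z) : Prop :=
  right_approx I g /\ right_minimal g.

(* Irr^-_I = I / (J I),  Irr^+_I = I / (I J) *)
Definition irr_minus_rel (I : morph_class) : morph_class := prod_ideal rad I.
Definition irr_plus_rel (I : morph_class) : morph_class := prod_ideal I rad.

Definition quot_nonzero (I N : morph_class) (X Y : C) : Prop :=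
  exists h : hom C X Y, I X Y h /\ ~ N X Y h.

(* the classes of f_1..f_m (elements of I(X,Y)) form a K-basis of the
   quotient space I(X,Y)/N(X,Y): they span it and are linearly independent
   modulo N(X,Y). *)
Definition quot_basis (I N : morph_class) (X Y : C) (m : nat)
    (f : 'I_m -> hom C X Y) : Prop :=
  (forall h : hom C X Y, I X Y h ->
     exists c : 'I_m -> K, N X Y (h - \sum_(j < m) c j *: f j)) /\
  (forall c : 'I_m -> K, N X Y (\sum_(j < m) c j *: f j) ->
     forall j, c j = 0).

End Notions.
Arguments biproduct {K C T} A X inj prj.
Arguments quot_basis {K C} I N {X Y} m f.

Record triangulated (K : fieldType) (C : KCat K) := {
  shift : C -> C;
  shiftm : forall X Y : C, hom C X Y -> hom C (shift X) (shift Y);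
  shiftm_lin : forall (X Y : C) (a : K) (f g : hom C X Y),
      shiftm (a *: f + g) = a *: shiftm f + shiftm g;
  shiftm_comp : forall (X Y Z : C) (g : hom C Y Z) (f : hom C X Y),
      shiftm (comp g f) = comp (shiftm g) (shiftm f);
  shiftm_id : forall X : C, shiftm (idm X) = idm (shift X);
  shift_ff : forall X Y : C, bijective (@shiftm X Y);
  shift_es : forall Y : C, exists X : C, iso (shift X) Y;
  dist : forall X Y Z : C, hom C X Y -> hom C Y Z -> hom C Z (shift X) -> Prop;
  TR1_iso : forall (X Y Z X' Y' Z' : C) (f : hom C X Y) (g : hom C Y Z)
      (h : hom C Z (shift X)) (f' : hom C X' Y') (g' : hom C Y' Z')
      (h' : hom C Z' (shift X')) (a : hom C X X') (b : hom C Y Y')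
      (c : hom C Z Z'),
      invertible a -> invertible b -> invertible c ->
      comp b f = comp f' a -> comp c g = comp g' b ->
      comp (shiftm a) h = comp h' c ->
      dist f g h -> dist f' g' h';
  TR1_id : forall X Z : C, idm Z = 0 ->
      dist (idm X) (0 : hom C X Z) (0 : hom C Z (shift X));
  TR1_ext : forall (X Y : C) (f : hom C X Y),
      exists (Z : C) (g : hom C Y Z) (h : hom C Z (shift X)), dist f g h;
  TR2 : forall (X Y Z : C) (f : hom C X Y) (g : hom C Y Z)
      (h : hom C Z (shift X)), dist f g h <-> dist g h (- shiftm f);
  TR3 : forall (X Y Z X' Y' Z' : C) (f : hom C X Y) (g : hom C Y Z)
      (h : hom C Z (shift X)) (f' : hom C X' Y') (g' : hom C Y' Z')
      (h' : hom C Z' (shift X')) (a : hom C X X') (b : hom C Y Y'),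
      dist f g h -> dist f' g' h' -> comp b f = comp f' a ->
      exists c : hom C Z Z',
        comp c g = comp g' b /\ comp (shiftm a) h = comp h' c;
  TR4 : forall (X Y Z Z' X' Y' : C) (f : hom C X Y) (g : hom C Y Z)
      (f2 : hom C Y Z') (f3 : hom C Z' (shift X))
      (g2 : hom C Z X') (g3 : hom C X' (shift Y))
      (h2 : hom C Z Y') (h3 : hom C Y' (shift X)),
      dist f f2 f3 -> dist g g2 g3 -> dist (comp g f) h2 h3 ->
      exists (u : hom C Z' Y') (v : hom C Y' X'),
        [/\ dist u v (comp (shiftm f2) g3),
            comp u f2 = comp h2 g, comp h3 u = f3,
            comp v h2 = g2 & comp g3 v = comp (shiftm f) h3]
}.

(* Main.v *)
From HB Require Import structures.
Require Import Defs.
From Stdlib Require Import Classical.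
Local Open Scope ring_scope.

Module Helpers.
Import GRing.Theory.
Set Implicit Arguments. Unset Strict Implicit. Unset Printing Implicit Defensive.
Import GRing.Theory.
Local Open Scope ring_scope.

Section Gen.
Variables (K : fieldType) (C : KCat K).
Implicit Types X Y Z W : C.

Lemma compDl X Y Z (f : hom C X Y) (g g' : hom C Y Z) :
  comp (g + g') f = comp g f + comp g' f.
Proof. by have := comp_linl f 1 g g'; rewrite !scale1r. Qed.
Lemma compDr X Y Z (g : hom C Y Z) (f f' : hom C X Y) :
  comp g (f + f') = comp g f + comp g f'.
Proof. by have := comp_linr g 1 f f'; rewrite !scale1r. Qed.
Lemma comp0l X Y Z (f : hom C X Y) : comp (0 : hom C Y Z) f = 0.
Proof.
have := compDl f (0 : hom C Y Z) 0; rewrite addr0 -{1}[comp 0 f]addr0.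
by move/addrI.
Qed.
Lemma comp0r X Y Z (g : hom C Y Z) : comp g (0 : hom C X Y) = 0.
Proof.
have := compDr g (0 : hom C X Y) 0; rewrite addr0 -{1}[comp g 0]addr0.
by move/addrI.
Qed.
Lemma compZl X Y Z (f : hom C X Y) a (g : hom C Y Z) :
  comp (a *: g) f = a *: comp g f.
Proof. by have := comp_linl f a g (0 : hom C Y Z); rewrite !addr0 comp0l addr0. Qed.
Lemma compZr X Y Z (g : hom C Y Z) a (f : hom C X Y) :
  comp g (a *: f) = a *: comp g f.
Proof. by have := comp_linr g a f (0 : hom C X Y); rewrite !addr0 comp0r addr0. Qed.
Lemma compNl X Y Z (f : hom C X Y) (g : hom C Y Z) : comp (- g) f = - comp g f.
Proof. by rewrite -scaleN1r compZl scaleN1r. Qed.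
Lemma compNr X Y Z (g : hom C Y Z) (f : hom C X Y) : comp g (- f) = - comp g f.
Proof. by rewrite -scaleN1r compZr scaleN1r. Qed.
Lemma compBl X Y Z (f : hom C X Y) (g g' : hom C Y Z) :
  comp (g - g') f = comp g f - comp g' f.
Proof. by rewrite compDl compNl. Qed.
Lemma compBr X Y Z (g : hom C Y Z) (f f' : hom C X Y) :
  comp g (f - f') = comp g f - comp g f'.
Proof. by rewrite compDr compNr. Qed.
Lemma comp_suml X Y Z (f : hom C X Y) (I : Type) (r : seq I) (P : pred I)
  (F : I -> hom C Y Z) :
  comp (\sum_(i <- r | P i) F i) f = \sum_(i <- r | P i) comp (F i) f.
Proof. exact: (big_morph (fun g => comp g f) (compDl f) (comp0l _ f)). Qed.
Lemma comp_sumr X Y Z (g : hom C Y Z) (I : Type) (r : seq I) (P : pred I)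
  (F : I -> hom C X Y) :
  comp g (\sum_(i <- r | P i) F i) = \sum_(i <- r | P i) comp g (F i).
Proof. exact: (big_morph (fun f => comp g f) (compDr g) (comp0r _ g)). Qed.

Lemma inv_idm X : invertible (idm X).
Proof. by exists (idm X); rewrite comp1m. Qed.

Lemma inv_comp X Y Z (f : hom C X Y) (g : hom C Y Z) :
  invertible f -> invertible g -> invertible (comp g f).
Proof.
move=> [f' [H1 H2]] [g' [H3 H4]]; exists (comp f' g'); split.
  by rewrite compA -(compA f') H3 compm1.
by rewrite compA -(compA g) H2 compm1.
Qed.

Lemma inv_sym X Y (f : hom C X Y) (g : hom C Y X) :
  comp g f = idm X -> comp f g = idm Y -> invertible g.
Proof. by move=> H1 H2; exists f. Qed.

Lemma idem_inv X (e : hom C X X) : comp e e = e -> invertible e -> e = idm X.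
Proof.
move=> He [w [H1 H2]].
by rewrite -H1 -{2}He compA H1 comp1m.
Qed.

Lemma local_indec X : local_end X -> indecomposable X.
Proof.
move=> [H0 Hl]; split => // A B i1 i2 p1 p2 H11 H22 H12 H21 Hs.
have E1 : comp (comp i1 p1) (comp i1 p1) = comp i1 p1.
  by rewrite compA -(compA i1) H11 compm1.
have E2 : comp (comp i2 p2) (comp i2 p2) = comp i2 p2.
  by rewrite compA -(compA i2) H22 compm1.
have Hs' : idm X - comp i1 p1 = comp i2 p2 by rewrite -Hs addrC addKr.
case: (Hl (comp i1 p1)) => [/(idem_inv E1) E|].
  right; have : comp i2 p2 = 0 by rewrite -Hs' E subrr.
  move=> Z0; rewrite -H22 -[comp p2 i2]comp1m -H22 compA -(compA p2) Z0.
  by rewrite comp0r comp0l.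
rewrite Hs' => /(idem_inv E2) E.
left; have Z0 : comp i1 p1 = 0.
  by apply: (addIr (idm X)); rewrite add0r -{1}E Hs.
by rewrite -H11 -[comp p1 i1]comp1m -H11 compA -(compA p1) Z0 comp0r comp0l.
Qed.

Lemma split_mono_local U V (h : hom C U V) (k : hom C V U) :
  local_end V -> idm U <> 0 -> comp k h = idm U -> invertible h.
Proof.
move=> [V0 Hl] U0 Hkh.
have E : comp (comp h k) (comp h k) = comp h k.
  by rewrite compA -(compA h) Hkh compm1.
case: (Hl (comp h k)) => [/(idem_inv E) E1|Hinv].
  by exists k.
exfalso; apply: U0.
have : comp (idm V - comp h k) h = 0.
  by rewrite compBl comp1m -compA Hkh compm1 subrr.
case: Hinv => w [Hw _] Z.
have h0 : h = 0 by rewrite -[h]comp1m -Hw -compA Z comp0r.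
by rewrite -Hkh h0 comp0r.
Qed.

Lemma rad_compl X Y Z (f : hom C X Y) (k : hom C Y Z) :
  rad f -> rad (comp k f).
Proof. by move=> Hf g; rewrite compA; apply: Hf. Qed.

Lemma inv_1m_swap X Y (a : hom C X Y) (b : hom C Y X) :
  invertible (idm X - comp b a) -> invertible (idm Y - comp a b).
Proof.
move=> [w [H1 H2]].
have Hb1 : comp (comp w b) (idm Y - comp a b) = b.
  have -> : comp (comp w b) (idm Y - comp a b) = comp (comp w (idm X - comp b a)) b.
    rewrite !compBr compBl !compm1; congr (_ - _); by rewrite !compA.
  by rewrite H1 comp1m.
have Hb2 : comp (idm X - comp b a) (comp w b) = b by rewrite compA H2 comp1m.
exists (idm Y + comp a (comp w b)); split.
- rewrite compDl comp1m -compA Hb1 subrK //.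
- rewrite compDr compm1.
  have -> : comp (idm Y - comp a b) (comp a (comp w b)) =
            comp a (comp (idm X - comp b a) (comp w b)).
    by rewrite !compBl compBr !comp1m -!compA.
  by rewrite Hb2 subrK.
Qed.

Lemma rad_compr X Y Z (f : hom C Y Z) (h : hom C X Y) :
  rad f -> rad (comp f h).
Proof.
move=> Hf g; rewrite compA.
apply: inv_1m_swap; rewrite compA; exact: Hf.
Qed.

Lemma rad0 X Y : rad (0 : hom C X Y).
Proof. by move=> g; rewrite comp0r subr0; apply: inv_idm. Qed.

Lemma radD X Y (f f' : hom C X Y) : rad f -> rad f' -> rad (f + f').
Proof.
move=> Hf Hf' g.
have [w [H1 H2]] := Hf g.
have := Hf' (comp w g) => Hi.
have -> : idm X - comp g (f + f') =
   comp (idm X - comp g f) (idm X - comp (comp w g) f').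
  rewrite compBr compm1 !compA H2 comp1m compDr.
  by rewrite opprD addrA.
by apply: inv_comp => //; exists w.
Qed.

Lemma radN X Y (f : hom C X Y) : rad f -> rad (- f).
Proof. by move=> Hf g; rewrite compNr -compNl; apply: Hf. Qed.

Lemma rad_sum X Y (I : Type) (r : seq I) (P : pred I) (F : I -> hom C X Y) :
  (forall i, P i -> rad (F i)) -> rad (\sum_(i <- r | P i) F i).
Proof. by move=> H; apply: (big_ind (@rad _ C X Y)) => //; [exact: rad0| exact: radD]. Qed.

Lemma rad_inv X (f : hom C X X) : rad f -> invertible (idm X - f).
Proof. by move=> /(_ (idm X)); rewrite comp1m. Qed.


Section Bip.
Variables (T : finType) (A : T -> C) (Xb : C).
Variables (inj : forall t, hom C (A t) Xb) (prj : forall t, hom C Xb (A t)).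
Hypothesis H1 : forall t, comp (prj t) (inj t) = idm (A t).
Hypothesis H2 : forall t t', t != t' -> comp (prj t) (inj t') = 0.

Lemma bp_prj_sum W (x : forall t, hom C W (A t)) t :
  comp (prj t) (\sum_t' comp (inj t') (x t')) = x t.
Proof.
rewrite comp_sumr (bigD1 t) //= big1 ?addr0.
  by rewrite compA H1 comp1m.
by move=> t' Ht'; rewrite compA H2 1?eq_sym // comp0l.
Qed.

Lemma bp_sum_inj W (y : forall t, hom C (A t) W) t :
  comp (\sum_t' comp (y t') (prj t')) (inj t) = y t.
Proof.
rewrite comp_suml (bigD1 t) //= big1 ?addr0.
  by rewrite -compA H1 compm1.
by move=> t' Ht'; rewrite -compA H2 // comp0r.
Qed.
End Bip.

Lemma bp_decl (T : finType) (A : T -> C) Xb inj prj W (h : hom C W Xb) :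
  biproduct A Xb inj prj -> h = \sum_t comp (inj t) (comp (prj t) h).
Proof.
case=> _ _ H3; rewrite -[h in LHS]comp1m -H3 comp_suml.
by apply: eq_bigr => t _; rewrite compA.
Qed.

Lemma bp_decr (T : finType) (A : T -> C) Xb inj prj W (h : hom C Xb W) :
  biproduct A Xb inj prj -> h = \sum_t comp (comp h (inj t)) (prj t).
Proof.
case=> _ _ H3; rewrite -[h in LHS]compm1 -H3 comp_sumr.
by apply: eq_bigr => t _; rewrite compA.
Qed.

Lemma conj_inv Y A0 (i : hom C A0 Y) (p : hom C Y A0) (e : hom C Y Y) :
  comp i p = idm Y -> comp p i = idm A0 ->
  invertible (comp p (comp e i)) -> invertible e.
Proof.
move=> Hip Hpi [w [Hw1 Hw2]].
exists (comp i (comp w p)); split.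
  rewrite -[e in LHS]compm1 -Hip.
  have -> : comp (comp i (comp w p)) (comp e (comp i p)) =
            comp i (comp (comp w (comp p (comp e i))) p).
    by rewrite !compA.
  by rewrite Hw1 comp1m.
rewrite -[e in LHS]comp1m -Hip.
have -> : comp (comp (comp i p) e) (comp i (comp w p)) =
          comp i (comp (comp (comp p (comp e i)) w) p).
  by rewrite !compA.
by rewrite Hw2 comp1m.
Qed.

Lemma indec_local (Hadd : Defs.additive C) (HKS : krull_schmidt C) Y :
  indecomposable Y -> local_end Y.
Proof.
move=> [Y0 Hind].
have [n [A [inj [prj [[Hb1 Hb2 Hb3] Hloc]]]]] := HKS Y.
case: n A inj prj Hb1 Hb2 Hb3 Hloc => [|n] A inj prj Hb1 Hb2 Hb3 Hloc.
  by exfalso; apply: Y0; rewrite -Hb3 big_ord0.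
have [B [inj' [prj' [Hc1 Hc2 Hc3]]]] := Hadd n (fun s => A (lift ord0 s)).
pose i2 := \sum_s comp (inj (lift ord0 s)) (prj' s).
pose p2 := \sum_s comp (inj' s) (prj (lift ord0 s)).
have Hl1 : forall s, comp (prj (lift ord0 s)) (inj (lift ord0 s)) = idm _ by move=> s; apply: Hb1.
have Hl2 : forall s s', s != s' -> comp (prj (lift ord0 s)) (inj (lift ord0 s')) = 0.
  by move=> s s' Hs; apply: Hb2; rewrite (inj_eq (@lift_inj _ ord0)).
have E12 : comp (prj ord0) i2 = 0.
  rewrite comp_sumr big1 // => s _; rewrite compA Hb2 ?comp0l //.
have E21 : comp p2 (inj ord0) = 0.
  rewrite comp_suml big1 // => s _; rewrite -compA Hb2 ?comp0r //.
have E22 : comp p2 i2 = idm B.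
  rewrite -Hc3 comp_suml; apply: eq_bigr => s _; rewrite -compA.
  by rewrite (bp_prj_sum Hl1 Hl2).
have Esum : comp (inj ord0) (prj ord0) + comp i2 p2 = idm Y.
  rewrite -Hb3 big_ord_recl; congr (_ + _).
  rewrite /i2 comp_suml; apply: eq_bigr => s _; rewrite -compA.
  by rewrite (bp_prj_sum Hc1 Hc2 (fun s => prj (lift ord0 s))).
have [HA0|HB0] := Hind _ _ _ _ _ _ (Hb1 ord0) E22 E12 E21 Esum.
  by case: (Hloc ord0).
have Hip : comp (inj ord0) (prj ord0) = idm Y.
  have : comp i2 p2 = 0 by rewrite -[i2]compm1 HB0 comp0r comp0l.
  by move=> Z0; rewrite -Esum Z0 addr0.
split => // e.
case: (Hloc ord0) => _ /(_ (comp (prj ord0) (comp e (inj ord0)))) [H|H].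
  by left; apply: conj_inv Hip (Hb1 ord0) H.
right; apply: conj_inv Hip (Hb1 ord0) _.
by rewrite compBl comp1m compBr Hb1.
Qed.

End Gen.

Set Implicit Arguments. Unset Strict Implicit. Unset Printing Implicit Defensive.
Import GRing.Theory.
Local Open Scope ring_scope.
Module EigM.
Import VectorInternalTheory.

Section Eig.
Variables (K : closedFieldType) (C : KCat K) (Y : C) (e : hom C Y Y).
Local Notation V := (hom C Y Y).
Local Notation d := (dim V).
Definition Lrow (r : 'rV[K]_d) : 'rV[K]_d := v2r (comp e (@r2v K V r)).
Fact Lrow_lin : linear Lrow.
Proof. by move=> a u v; rewrite /Lrow linearP comp_linr linearP. Qed.
HB.instance Definition _ := GRing.isLinear.Build K _ _ _ Lrow Lrow_lin.

Lemma eigen_exists : idm Y <> 0 ->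
  exists (l : K) (x : hom C Y Y), x != 0 /\ comp e x = l *: x.
Proof.
move=> H1.
have dgt0 : (0 < d)%N.
  rewrite lt0n; apply/negP => /eqP d0.
  apply: H1. rewrite -(v2rK (idm Y)). 
  have -> : v2r (idm Y) = 0 by apply/rowP => i; exfalso; move: (ltn_ord i); rewrite [X in (_ < X)%N]d0.
  by rewrite linear0.
have /closed_rootP [a rAa] : size (char_poly (lin1_mx Lrow)) != 1%N.
  by rewrite size_char_poly; case: (d) dgt0.
rewrite -eigenvalue_root_char in rAa.
case/eigenvalueP: rAa => v Hv vn0.
exists a, (r2v v); split.
  by apply: contraNneq vn0 => H; rewrite -(r2vK v) H linear0.
apply: v2r_inj; rewrite linearZ /= -/(Lrow v) -mul_rV_lin1 Hv.
by rewrite r2vK.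
Qed.
End Eig.

End EigM.
Import EigM.

Unset Implicit Arguments.
Unset Printing Implicit Defensive.
Import GRing.Theory.
Local Open Scope ring_scope.

Section Ideal.
Variables (K : fieldType) (C : KCat K) (I : morph_class C) (HI : is_ideal I).
Implicit Types X Y Z V : C.
Set Implicit Arguments. Unset Strict Implicit.

Lemma I0 X Y : I X Y 0. Proof. by case: HI. Qed.
Lemma Ipost X Y Z (g : hom C Y Z) (h : hom C X Y) : I X Y h -> I X Z (comp g h).
Proof. by case: HI => _ _ H _; apply: H. Qed.
Lemma Ipre X Y Z (g : hom C Y Z) (h : hom C X Y) : I Y Z g -> I X Z (comp g h).
Proof. by case: HI => _ _ _ H; apply: H. Qed.
Lemma IB X Y (g h : hom C X Y) : I X Y g -> I X Y h -> I X Y (g - h).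
Proof. by case: HI => _ H _ _; apply: H. Qed.
Lemma ID X Y (g h : hom C X Y) : I X Y g -> I X Y h -> I X Y (g + h).
Proof.
move=> Hg Hh; have := IB Hg (IB (I0 X Y) Hh).
by rewrite sub0r opprK.
Qed.
Lemma Isum X Y (J : Type) (r : seq J) (P : pred J) (F : J -> hom C X Y) :
  (forall i, P i -> I X Y (F i)) -> I X Y (\sum_(i <- r | P i) F i).
Proof. by move=> H; apply: (big_ind (I X Y)) => //; [exact: I0 | exact: ID]. Qed.
Lemma IN X Y (g : hom C X Y) : I X Y g -> I X Y (- g).
Proof. by move=> Hg; have := IB (I0 X Y) Hg; rewrite sub0r. Qed.

Lemma prod1 X V Y (a : hom C V Y) (b : hom C X V) :
  rad a -> I X V b -> prod_ideal (@rad _ C) I (comp a b).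
Proof.
move=> Ha Hb; exists 1%N, (fun _ => V), (fun _ => a), (fun _ => b).
by split => // ; rewrite big_ord1.
Qed.
End Ideal.

Lemma nonunit_rad (K : fieldType) (C : KCat K) (V : C) (N : hom C V V) :
  local_end V -> ~ invertible N -> rad N.
Proof.
move=> HV HN k; case: (HV) => V0 /(_ (comp k N)) [[w [Hw1 Hw2]]|//].
exfalso; apply: HN; apply: (@split_mono_local _ _ _ _ N (comp w k)) => //.
by rewrite -compA.
Qed.

Lemma rad_noniso (K : fieldType) (C : KCat K) (U V : C) (h : hom C U V) :
  local_end U -> local_end V -> ~ iso U V -> rad h.
Proof.
move=> HU HV Hni k; case: (HU) => U0 /(_ (comp k h)) [[w [Hw1 Hw2]]|//].
exfalso; apply: Hni; exists h; apply: (@split_mono_local _ _ _ _ h (comp w k)) => //.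
by rewrite -compA.
Qed.

Section Part1.
Unset Implicit Arguments.
Variables (K : closedFieldType) (C : KCat K).
Variables (Hadd : Defs.additive C) (HKS : krull_schmidt C).
Variables (I : morph_class C) (HI : is_ideal I).
Variable Happ : forall X : C, exists (Y : C) (f : hom C X Y), left_approx I f.
Variables (X : C) (n : nat) (Yi : 'I_n -> C) (m : 'I_n -> nat) (Y : C).
Variable inj : forall t : {i : 'I_n & 'I_(m i)}, hom C (Yi (tag t)) Y.
Variable prj : forall t : {i : 'I_n & 'I_(m i)}, hom C Y (Yi (tag t)).
Variable HYi : forall i, indecomposable (Yi i).
Variable HYdist : forall i j, i != j -> ~ iso (Yi i) (Yi j).
Variable HY : biproduct (fun t : {i : 'I_n & 'I_(m i)} => Yi (tag t)) Y inj prj.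
Variable f : hom C X Y.
Variable Hf1 : forall i (j : 'I_(m i)),
        I X (Yi i) (comp (prj (Tagged (fun i => 'I_(m i)) j)) f).
Variable Hf2 : forall i, quot_basis I (irr_minus_rel I) (X:=X) (Y:=Yi i) (m i)
                  (fun j => comp (prj (Tagged (fun i => 'I_(m i)) j)) f).
Variable Hf3 : forall Y' : C, indecomposable Y' ->
        quot_nonzero I (irr_minus_rel I) X Y' -> exists i, iso Y' (Yi i).
Set Implicit Arguments. Unset Strict Implicit.

Lemma If : I X Y f.
Proof.
rewrite (bp_decl f HY); apply: Isum => // -[i j] _.
by apply: Ipost => //; apply: Hf1.
Qed.

Lemma HYloc i : local_end (Yi i).
Proof. exact: indec_local. Qed.

Section Approx.
Variables (A : C) (a : hom C X A).
Hypothesis Ha : left_approx I a.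

Definition Tp (V : C) (h : hom C X V) : Prop :=
  exists (u : hom C Y V) (r : hom C A V), rad r /\ h = comp u f + comp r a.

Lemma Tp0 V : Tp (0 : hom C X V).
Proof. by exists 0, 0; rewrite !comp0l addr0; split => //; apply: rad0. Qed.

Lemma TpD V (h h' : hom C X V) : Tp h -> Tp h' -> Tp (h + h').
Proof.
move=> [u [r [Hr ->]]] [u' [r' [Hr' ->]]].
exists (u + u'), (r + r'); split; first exact: radD.
by rewrite !compDl addrACA.
Qed.

Lemma Tp_sum V (J : Type) (s : seq J) (P : pred J) (F : J -> hom C X V) :
  (forall i, P i -> Tp (F i)) -> Tp (\sum_(i <- s | P i) F i).
Proof. by move=> H; apply: (big_ind (@Tp V)) => //; [exact: Tp0 | exact: TpD]. Qed.

Lemma Tp_post V V' (k : hom C V V') (h : hom C X V) : Tp h -> Tp (comp k h).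
Proof.
move=> [u [r [Hr ->]]]; exists (comp k u), (comp k r); split.
  exact: rad_compl.
by rewrite compDr !compA.
Qed.

Lemma rel_Tp V (h : hom C X V) : irr_minus_rel I h -> Tp h.
Proof.
move=> [nn [W [aa [bb [Haa Hbb ->]]]]].
apply: Tp_sum => k _.
have [v Hv] := Ha.2 _ _ (Hbb k).
exists 0, (comp (aa k) v); split; first exact: rad_compr.
by rewrite comp0l add0r Hv compA.
Qed.

Lemma indec_Tp V (h : hom C X V) : indecomposable V -> I X V h -> Tp h.
Proof.
move=> HV Hh.
case: (classic (quot_nonzero I (irr_minus_rel I) X V)) => Hq; last first.
  apply: rel_Tp; apply: NNPP => Hn; apply: Hq; by exists h.
have [i [phi [psi [Hpp1 Hpp2]]]] := Hf3 V HV Hq.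
have Hph : I X (Yi i) (comp phi h) by apply: Ipost.
have [c Hc] := (Hf2 i).1 _ Hph.
have := rel_Tp Hc => HT.
move: HT; set s := (\sum_(j < m i) _) => HT.
have HT2 : Tp (comp phi h).
  rewrite -[comp phi h](subrK s); apply: TpD => //.
  exists (\sum_(j < m i) (c j *: prj (Tagged (fun i => 'I_(m i)) j) : hom C Y (Yi i))), 0.
  split; first exact: rad0.
  rewrite comp0l addr0 comp_suml /s; apply: eq_bigr => j _.
  by rewrite compZl.
have := Tp_post psi HT2.
by rewrite compA Hpp1 comp1m.
Qed.

Lemma a_fact : exists w : hom C Y A, a = comp w f.
Proof.
have [nA [B [inj' [prj' [HB Hloc]]]]] := HKS A.
have HTa : Tp a.
  rewrite (bp_decl a HB); apply: Tp_sum => k _.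
  apply: Tp_post; apply: indec_Tp; first exact: local_indec.
  by apply: Ipost => //; case: Ha.
case: HTa => u [r [Hr Har]].
have [w [Hw1 Hw2]] := rad_inv Hr.
exists (comp w u).
have : comp (idm A - r) a = comp u f.
  by rewrite compBl comp1m {1}Har addrK.
move=> E; by rewrite -compA -E compA Hw1 comp1m.
Qed.
End Approx.

Lemma approx_f : left_approx I f.
Proof.
split; first exact: If.
move=> W h Hh.
have [A [a Ha]] := Happ X.
have [w Hw] := a_fact Ha.
have [v Hv] := Ha.2 _ _ Hh.
by exists (comp v w); rewrite Hv Hw compA.
Qed.


Section Minimal.
Variable g : hom C Y Y.
Hypothesis Hg : comp g f = f.
Let u := idm Y - g.

Lemma uf0 : comp u f = 0.
Proof. by rewrite /u compBl comp1m Hg subrr. Qed.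

Section Row.
Variable i : 'I_n.

Definition Pm (h : hom C Y (Yi i)) : Prop :=
  exists (mu : 'I_(m i) -> K) (r : hom C Y (Yi i)), rad r /\
    h = \sum_(j < m i) (mu j *: prj (Tagged (fun i => 'I_(m i)) j) : hom C Y (Yi i)) + r.

Lemma Pm0 : Pm 0.
Proof.
exists (fun _ => 0), 0; split; first exact: rad0.
by rewrite addr0 big1 // => j _; rewrite scale0r.
Qed.

Lemma PmD h h' : Pm h -> Pm h' -> Pm (h + h').
Proof.
move=> [mu [r [Hr ->]]] [mu' [r' [Hr' ->]]].
exists (fun j => mu j + mu' j), (r + r'); split; first exact: radD.
rewrite addrACA; congr (_ + _); rewrite -big_split /=.
by apply: eq_bigr => j _; rewrite scalerDl.
Qed.

Lemma Pm_sum (J : Type) (s : seq J) (P : pred J) (F : J -> hom C Y (Yi i)) :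
  (forall k, P k -> Pm (F k)) -> Pm (\sum_(k <- s | P k) F k).
Proof. by move=> H; apply: (big_ind Pm) => //; [exact: Pm0 | exact: PmD]. Qed.

Lemma Pm_term (j : 'I_(m i)) (t' : {i : 'I_n & 'I_(m i)}) :
  Pm (comp (comp (comp (prj (Tagged (fun i => 'I_(m i)) j)) u) (inj t')) (prj t')).
Proof.
case: t' => i' j' /=.
set D := comp (comp (prj (Tagged (fun i => 'I_(m i)) j)) u) _.
case: (eqVneq i' i) => [Heq|Hne].
  subst i'.
  have [l [x [xn0 Hx]]] := eigen_exists D (HYloc i).1.
  set N := D - l *: idm (Yi i).
  have HN : rad N.
    apply: nonunit_rad; first exact: HYloc.
    move=> [w [Hw1 Hw2]]; move/eqP: xn0; apply.
    have : comp N x = 0 by rewrite /N compBl compZl comp1m Hx subrr.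
    by move=> E; rewrite -[x]comp1m -Hw1 -compA E comp0r.
  exists (fun k => if k == j' then l else 0), (comp N (prj (Tagged (fun i => 'I_(m i)) j'))).
  split; first exact: rad_compr.
  rewrite (bigD1 j') //= eqxx big1 ?addr0 => [|k Hk]; last by rewrite (negbTE Hk) scale0r.
  have -> : D = l *: idm (Yi i) + N by rewrite /N addrC subrK.
  by rewrite compDl compZl comp1m.
exists (fun _ => 0), (comp D (prj (Tagged (fun i => 'I_(m i)) j'))).
split.
  apply: rad_compr; apply: rad_noniso; try exact: HYloc.
  by apply: HYdist.
by rewrite big1 ?add0r // => k _; rewrite scale0r.
Qed.

Lemma row_rad (j : 'I_(m i)) : rad (comp (prj (Tagged (fun i => 'I_(m i)) j)) u).
Proof.
have HP : Pm (comp (prj (Tagged (fun i => 'I_(m i)) j)) u).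
  rewrite [X in Pm X](bp_decr _ HY); apply: Pm_sum => t' _.
  exact: Pm_term.
case: HP => mu [r [Hr Hrow]].
have H0 : comp (comp (prj (Tagged (fun i => 'I_(m i)) j)) u) f = 0.
  by rewrite -compA uf0 comp0r.
have E : comp (comp (prj (Tagged (fun i => 'I_(m i)) j)) u) f =
    \sum_(k < m i) (mu k *: comp (prj (Tagged (fun i => 'I_(m i)) k)) f : hom C X (Yi i))
    + comp r f.
  rewrite Hrow compDl comp_suml; congr (_ + _).
  by apply: eq_bigr => k _; rewrite compZl.
have Hsum : \sum_(k < m i) (mu k *: comp (prj (Tagged (fun i => 'I_(m i)) k)) f : hom C X (Yi i))
             = comp (- r) f.
  by apply/eqP; rewrite compNl -addr_eq0 -E H0.
have Hmu : forall k, mu k = 0.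
  apply: (Hf2 i).2; rewrite Hsum; apply: prod1.
    exact: radN.
  exact: If.
rewrite Hrow big1 ?add0r // => k _; by rewrite Hmu scale0r.
Qed.
End Row.

Lemma u_rad : rad u.
Proof.
rewrite (bp_decl u HY); apply: rad_sum => -[i j] _.
apply: rad_compl; exact: row_rad.
Qed.

Lemma g_inv : invertible g.
Proof.
have := rad_inv u_rad.
by rewrite /u opprB addrC subrK.
Qed.
End Minimal.

Lemma part1 : source_map I f.
Proof.
split; first exact: approx_f.
by move=> g Hg; apply: g_inv.
Qed.

End Part1.

Unset Implicit Arguments.
Unset Printing Implicit Defensive.
Import GRing.Theory.
Local Open Scope ring_scope.

Section Op.
Variables (K : fieldType) (C : KCat K).

Definition opC : KCat K :=
  @Build_KCat K (obj C) (fun X Y => hom C Y X) (fun X Y Z g f => comp f g)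
    (fun X => idm X)
    (fun X Y Z W h g f => esym (compA f g h))
    (fun X Y f => compm1 f) (fun X Y f => comp1m f)
    (fun X Y Z f a g g' => comp_linr f a g g')
    (fun X Y Z g a f f' => comp_linl g a f f').

Lemma inv_op (X Y : C) (f : hom C Y X) :
  @invertible _ opC X Y f <-> @invertible _ C Y X f.
Proof. by split => -[g [H1 H2]]; exists g; split. Qed.

Lemma iso_op (X Y : C) : @iso _ opC X Y <-> @iso _ C Y X.
Proof. by split => -[f Hf]; exists f; apply/inv_op. Qed.

Lemma local_op (X : C) : @local_end _ opC X <-> @local_end _ C X.
Proof.
split => -[H0 H]; split => // e; case: (H e) => He; [left|right|left|right];
  by apply/inv_op.
Qed.

Lemma indec_op (X : C) : @indecomposable _ opC X <-> @indecomposable _ C X.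
Proof.
split => -[H0 H]; split => // A B i1 i2 p1 p2 H11 H22 H12 H21 Hs.
  by apply: (H A B p1 p2 i1 i2) => //; rewrite /= addrC.
by apply: (H A B p1 p2 i1 i2) => //; rewrite /= addrC.
Qed.

Lemma rad_op (X Y : C) (f : hom C Y X) : @rad _ opC X Y f <-> @rad _ C Y X f.
Proof.
split => H g.
  apply: inv_1m_swap; apply/(inv_op X X); exact: H.
apply/(inv_op X X); apply: inv_1m_swap; exact: H.
Qed.

Lemma bip_op (T : finType) (A : T -> C) (X : C) inj prj :
  @biproduct _ C T A X inj prj -> @biproduct _ opC T A X prj inj.
Proof. case=> H1 H2 H3; split => // t t' Ht; apply: H2; by rewrite eq_sym. Qed.

Lemma additive_op : Defs.additive C -> Defs.additive opC.
Proof.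
move=> H nn A; have [X [inj [prj Hb]]] := H nn A.
by exists X, prj, inj; apply: bip_op.
Qed.

Lemma ks_op : krull_schmidt C -> krull_schmidt opC.
Proof.
move=> H X; have [nn [A [inj [prj [Hb Hl]]]]] := H X.
exists nn, A, prj, inj; split; first exact: bip_op.
by move=> t; apply/local_op.
Qed.

Variable I : morph_class C.
Definition opI : morph_class opC := fun X Y f => I Y X f.

Lemma ideal_op : is_ideal I -> is_ideal opI.
Proof.
case=> H0 H1 H2 H3; split.
- by move=> X Y; apply: H0.
- by move=> X Y f g Hf Hg; apply: H1.
- by move=> X Y Z g f Hf; apply: H3.
- by move=> X Y Z g f Hg; apply: H2.
Qed.

Lemma rel_op (X Y : C) (h : hom C Y X) :
  @irr_minus_rel _ opC opI X Y h <-> @irr_plus_rel _ C I Y X h.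
Proof.
split => -[nn [W [a [b [Ha Hb ->]]]]].
  exists nn, W, b, a; split => // k; exact/rad_op.
exists nn, W, b, a; split => // k; exact/rad_op.
Qed.

End Op.
Arguments opC {K} C.
Arguments opI {K C} I.
Arguments additive_op {K C} _.
Arguments ks_op {K C} _.
Arguments ideal_op {K C I} _.
Arguments bip_op {K C T A X inj prj} _.

Lemma iso_sym (K : fieldType) (C : KCat K) (X Y : C) : iso X Y -> iso Y X.
Proof. by case=> f [g [H1 H2]]; exists g; exists f. Qed.


End Helpers.
Import Helpers.
Unset Implicit Arguments.

Theorem proposition4p9 (K : closedFieldType) (C : KCat K)
  (TC : triangulated C) (Hadd : additive C) (HKS : krull_schmidt C)
  (I : morph_class C) (HI : is_ideal I) (HIff : functorially_finite I)
  (X Z : C) (HX : indecomposable X) (HZ : indecomposable Z)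
  (n : nat) (Yi : 'I_n -> C) (m : 'I_n -> nat) (Y : C)
  (inj : forall t : {i : 'I_n & 'I_(m i)}, hom C (Yi (tag t)) Y)
  (prj : forall t : {i : 'I_n & 'I_(m i)}, hom C Y (Yi (tag t)))
  (HYi : forall i, indecomposable (Yi i))
  (Hm : forall i, (0 < m i)%N)
  (HYdist : forall i j, i != j -> ~ iso (Yi i) (Yi j))
  (HY : biproduct (fun t : {i : 'I_n & 'I_(m i)} => Yi (tag t)) Y inj prj) :
  (forall f : hom C X Y,
     (forall i (j : 'I_(m i)),
        I X (Yi i) (comp (prj (Tagged (fun i => 'I_(m i)) j)) f)) ->
     (forall i, quot_basis I (irr_minus_rel I) (X:=X) (Y:=Yi i) (m i)
                  (fun j => comp (prj (Tagged (fun i => 'I_(m i)) j)) f)) ->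
     (forall Y' : C, indecomposable Y' ->
        quot_nonzero I (irr_minus_rel I) X Y' -> exists i, iso Y' (Yi i)) ->
     source_map I f)
  /\
  (forall g : hom C Y Z,
     (forall i (j : 'I_(m i)),
        I (Yi i) Z (comp g (inj (Tagged (fun i => 'I_(m i)) j)))) ->
     (forall i, quot_basis I (irr_plus_rel I) (X:=Yi i) (Y:=Z) (m i)
                  (fun j => comp g (inj (Tagged (fun i => 'I_(m i)) j)))) ->
     (forall Y' : C, indecomposable Y' ->
        quot_nonzero I (irr_plus_rel I) Y' Z -> exists i, iso Y' (Yi i)) ->
     sink_map I g).
Proof.
split.
  move=> f Hf1 Hf2 Hf3.
  apply: (part1 Hadd HKS HI _ HYi HYdist HY Hf1 Hf2 Hf3).
  by move=> X'; case: (HIff X').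
move=> g Hg1 Hg2 Hg3.
have HappOp : forall X' : opC C, exists (Y' : opC C) (f : hom (opC C) X' Y'),
    left_approx (opI I) f.
  move=> X'; case: (HIff X') => _ [Y' [g' Hg']].
  by exists Y', g'.
have HYiop : forall i, @indecomposable _ (opC C) (Yi i).
  by move=> i; apply/indec_op.
have HYdop : forall i j, i != j -> ~ @iso _ (opC C) (Yi i) (Yi j).
  move=> i j Hij /iso_op; apply: HYdist; by rewrite eq_sym.
have Hg2' : forall i, quot_basis (opI I) (irr_minus_rel (opI I))
     (X := (Z : opC C)) (Y := (Yi i : opC C)) (m i)
     (fun j => comp g (inj (Tagged (fun i => 'I_(m i)) j))).
  move=> i; case: (Hg2 i) => Hs Hl; split.
    move=> h Hh; have [c Hc] := Hs h Hh; exists c; exact/rel_op.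
  by move=> c Hc; apply: Hl; apply/rel_op.
have Hg3' : forall Y' : opC C, @indecomposable _ (opC C) Y' ->
    quot_nonzero (opI I) (irr_minus_rel (opI I)) Z Y' ->
    exists i, @iso _ (opC C) Y' (Yi i).
  move=> Y' /indec_op HY' [h [Hh Hnr]].
  have [|i Hi] := Hg3 Y' HY'.
    by exists h; split => // Hr; apply: Hnr; apply/rel_op.
  by exists i; apply/iso_op; apply: iso_sym.
have S := @part1 K (opC C) (additive_op Hadd) (ks_op HKS) (opI I)
  (ideal_op HI) HappOp Z n Yi m Y prj inj HYiop HYdop (bip_op HY) g Hg1 Hg2' Hg3'.
case: S => Sa Sm; split; first exact: Sa.
move=> h Hh; apply/inv_op; exact: Sm.
Qed.
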